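(* If $\tau\in\mathcal{T}$ and $(\mathbb{R},\tau)$ is locally connected, then $(\mathbb{R},\tau)$ is locally compact and completely metrizable, and $\Gamma(\tau)$ is closed in the Euclidean topology. Moreover, $\Gamma(\tau)$ is countable if and only if $(\mathbb{R},\tau)$ is second countable.
   Context: $\eta$ denotes the Euclidean topology on $\mathbb{R}$; $\mathcal{T}$ is the family of all topologies on $\mathbb{R}$ finer than $\eta$. $\Gamma(\tau)=\{x\in\mathbb{R}:\mathcal{U}_\eta(x)\neq\mathcal{U}_\tau(x)\}$ where $\mathcal{U}_\tau(x)$ is the neighborhood filter of $x$ in $\tau$. *)

(* Defs.v *)
From Stdlib Require Import Reals List.
Open Scope R_scope.

Definition is_topology (tau : (R -> Prop) -> Prop) : Prop :=
  tau (fun _ => True) /\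
  (forall F : (R -> Prop) -> Prop, (forall U, F U -> tau U) ->
      tau (fun x => exists U, F U /\ U x)) /\
  (forall U V, tau U -> tau V -> tau (fun x => U x /\ V x)).

Definition eta : (R -> Prop) -> Prop := open_set.

Definition in_T (tau : (R -> Prop) -> Prop) : Prop :=
  is_topology tau /\ (forall U, eta U -> tau U).

Definition nbhd (tau : (R -> Prop) -> Prop) (x : R) (N : R -> Prop) : Prop :=
  exists U, tau U /\ U x /\ (forall y, U y -> N y).

Definition Gamma (tau : (R -> Prop) -> Prop) (x : R) : Prop :=
  ~ (forall N, nbhd eta x N <-> nbhd tau x N).

Definition connected_in (tau : (R -> Prop) -> Prop) (A : R -> Prop) : Prop :=
  forall U V, tau U -> tau V ->
    (forall x, A x -> U x \/ V x) ->
    (exists x, A x /\ U x) -> (exists x, A x /\ V x) ->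
    exists x, A x /\ U x /\ V x.

Definition locally_connected (tau : (R -> Prop) -> Prop) : Prop :=
  forall x U, tau U -> U x ->
    exists V, tau V /\ V x /\ connected_in tau V /\ (forall y, V y -> U y).

Definition compact_in (tau : (R -> Prop) -> Prop) (K : R -> Prop) : Prop :=
  forall F : (R -> Prop) -> Prop, (forall U, F U -> tau U) ->
    (forall x, K x -> exists U, F U /\ U x) ->
    exists l : list (R -> Prop), (forall U, In U l -> F U) /\
      (forall x, K x -> exists U, In U l /\ U x).

Definition locally_compact (tau : (R -> Prop) -> Prop) : Prop :=
  forall x, exists K, nbhd tau x K /\ compact_in tau K.

Definition is_metric (d : R -> R -> R) : Prop :=
  (forall x y, 0 <= d x y) /\ (forall x y, d x y = 0 <-> x = y) /\
  (forall x y, d x y = d y x) /\ (forall x y z, d x z <= d x y + d y z).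

Definition metric_induces (d : R -> R -> R) (tau : (R -> Prop) -> Prop) : Prop :=
  forall U, tau U <-> (forall x, U x -> exists e, 0 < e /\ forall y, d x y < e -> U y).

Definition metric_complete (d : R -> R -> R) : Prop :=
  forall u : nat -> R,
    (forall e, 0 < e -> exists N, forall m n, (N <= m)%nat -> (N <= n)%nat -> d (u m) (u n) < e) ->
    exists l, forall e, 0 < e -> exists N, forall n, (N <= n)%nat -> d (u n) l < e.

Definition completely_metrizable (tau : (R -> Prop) -> Prop) : Prop :=
  exists d, is_metric d /\ metric_induces d tau /\ metric_complete d.

Definition countable_set (A : R -> Prop) : Prop :=
  exists f : nat -> R, forall x, A x -> exists n, f n = x.

Definition second_countable (tau : (R -> Prop) -> Prop) : Prop :=
  exists B : nat -> (R -> Prop), (forall n, tau (B n)) /\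
    (forall U x, tau U -> U x -> exists n, B n x /\ (forall y, B n y -> U y)).

(* Main.v *)
Require Import Defs.
From Stdlib Require Import Reals List.
From Stdlib Require Import Lra Lia Classical ClassicalEpsilon FunctionalExtensionality PropExtensionality Arith Cantor ZArith.
Open Scope R_scope.

Lemma tau_ext (tau : (R -> Prop) -> Prop) U V :
  tau U -> (forall z, U z <-> V z) -> tau V.
Proof.
  intros H E. replace V with U; auto.
  apply functional_extensionality; intro z; apply propositional_extensionality; auto.
Qed.

Lemma eta_of (U : R -> Prop) :
  (forall x, U x -> exists e, 0 < e /\ forall y, Rabs (y - x) < e -> U y) -> eta U.
Proof.
  intros H x Hx. destruct (H x Hx) as [e [He H']].
  exists (mkposreal e He). intros y Hy. apply H'. exact Hy.
Qed.

Lemma eta_ball x e : eta (fun y => Rabs (y - x) < e).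
Proof.
  apply eta_of. intros y Hy. exists (e - Rabs (y - x)). split. lra.
  intros z Hz. pose proof (Rabs_triang (z - y) (y - x)).
  replace (z - y + (y - x)) with (z - x) in H by ring. lra.
Qed.

Lemma eta_lt c : eta (fun y => y < c).
Proof.
  apply eta_of. intros y Hy. exists (c - y). split. lra.
  intros z Hz. apply Rabs_def2 in Hz. lra.
Qed.

Lemma eta_gt c : eta (fun y => c < y).
Proof.
  apply eta_of. intros y Hy. exists (y - c). split. lra.
  intros z Hz. apply Rabs_def2 in Hz. lra.
Qed.

Lemma eta_int a b : eta (fun y => a < y < b).
Proof.
  apply eta_of. intros y Hy. exists (Rmin (y - a) (b - y)). split.
  apply Rmin_glb_lt; lra.
  intros z Hz. apply Rabs_def2 in Hz. pose proof (Rmin_l (y-a) (b-y)). pose proof (Rmin_r (y-a) (b-y)). lra.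
Qed.

Lemma tauT tau : in_T tau -> tau (fun _ => True).
Proof. intros [[H _] _]. exact H. Qed.

Lemma tauI tau U V : in_T tau -> tau U -> tau V -> tau (fun x => U x /\ V x).
Proof. intros [[_ [_ H]] _]. apply H. Qed.

Lemma tauE tau U : in_T tau -> eta U -> tau U.
Proof. intros [_ H]. apply H. Qed.

Lemma tauU tau U V : in_T tau -> tau U -> tau V -> tau (fun x => U x \/ V x).
Proof.
  intros [[_ [H _]] _] HU HV.
  apply tau_ext with (fun x => exists W, (W = U \/ W = V) /\ W x).
  - apply H. intros W [-> | ->]; auto.
  - intro z. split.
    + intros [W [[-> | ->] Hw]]; auto.
    + intros [Hz|Hz]; eauto.
Qed.

Lemma tauUnion tau (F : (R -> Prop) -> Prop) : in_T tau -> (forall U, F U -> tau U) ->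
  tau (fun x => exists U, F U /\ U x).
Proof. intros [[_ [H _]] _]. apply H. Qed.

Lemma conn_interval tau A a b c : in_T tau -> connected_in tau A -> A a -> A b -> a < c < b -> A c.
Proof.
  intros HT HA Ha Hb Hc. apply NNPP; intro Hn.
  destruct (HA (fun y => y < c) (fun y => c < y)) as [z [Hz [H1 H2]]].
  - apply tauE; auto. apply eta_lt.
  - apply tauE; auto. apply eta_gt.
  - intros x Hx. destruct (Rtotal_order x c) as [H|[H|H]]; auto. subst; contradiction.
  - exists a; split; auto; lra.
  - exists b; split; auto; lra.
  - lra.
Qed.

Definition K tau x y := exists A, connected_in tau A /\ A x /\ A y.

Lemma K_refl tau x : K tau x x.
Proof.
  exists (fun z => z = x). repeat split; auto.
  intros U V _ _ _ [a [Ha Ua]] [b [Hb Vb]]. subst. exists x. auto.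
Qed.

Lemma K_sym tau x y : K tau x y -> K tau y x.
Proof. intros [A [H1 [H2 H3]]]. exists A; auto. Qed.

Lemma conn_union tau A B p : connected_in tau A -> connected_in tau B -> A p -> B p ->
  connected_in tau (fun z => A z \/ B z).
Proof.
  intros HA HB Ap Bp U V HU HV Hc [u [Hu1 Hu2]] [v [Hv1 Hv2]].
  assert (cA : forall x, A x -> U x \/ V x) by (intros; apply Hc; auto).
  assert (cB : forall x, B x -> U x \/ V x) by (intros; apply Hc; auto).
  destruct (classic (exists x, A x /\ U x /\ V x)) as [[x Hx]|nA].
  { exists x; tauto. }
  destruct (classic (exists x, B x /\ U x /\ V x)) as [[x Hx]|nB].
  { exists x; tauto. }
  exfalso.
  destruct (cA p Ap) as [Up|Vp].
  -
    assert (AU: forall x, A x -> ~ V x).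
    { intros x Ax Vx. destruct (HA U V HU HV cA) as [y Hy]; eauto. }
    assert (BU: forall x, B x -> ~ V x).
    { intros x Bx Vx. destruct (HB U V HU HV cB) as [y Hy]; eauto. }
    destruct Hv1 as [Av|Bv]; [eapply AU|eapply BU]; eauto.
  - assert (AU: forall x, A x -> ~ U x).
    { intros x Ax Ux. destruct (HA U V HU HV cA) as [y Hy]; eauto. }
    assert (BU: forall x, B x -> ~ U x).
    { intros x Bx Ux. destruct (HB U V HU HV cB) as [y Hy]; eauto. }
    destruct Hu1 as [Au|Bu]; [eapply AU|eapply BU]; eauto.
Qed.

Lemma K_trans tau x y z : K tau x y -> K tau y z -> K tau x z.
Proof.
  intros [A [HA [Ax Ay]]] [B [HB [By Bz]]].
  exists (fun w => A w \/ B w). split; [eapply conn_union; eauto| auto].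
Qed.

Lemma SideL tau V x : in_T tau -> tau V -> V x -> connected_in tau V ->
  exists r, 0 < r /\ ((forall y, x - r < y < x -> V y) \/ (forall y, y < x -> ~ K tau x y)).
Proof.
  intros HT HV Vx CV.
  destruct (classic (exists p, V p /\ p < x)) as [[p [Vp Hp]]|Hn].
  - exists (x - p). split. lra. left. intros y Hy. apply (conn_interval tau V p x y); auto. lra.
  - exists 1. split. lra. right. intros y Hy [A [CA [Ax Ay]]].
    destruct (CA (fun z => z < x) (fun z => V z \/ x < z)) as [z [Az [H1 [H2|H2]]]].
    + apply tauE; auto. apply eta_lt.
    + apply tauU; auto. apply tauE; auto. apply eta_gt.
    + intros z _. destruct (Rtotal_order z x) as [H|[H|H]]; auto. subst; auto.
    + exists y; auto.
    + exists x; auto.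
    + apply Hn; eauto.
    + lra.
Qed.

Lemma SideR tau V x : in_T tau -> tau V -> V x -> connected_in tau V ->
  exists r, 0 < r /\ ((forall y, x < y < x + r -> V y) \/ (forall y, x < y -> ~ K tau x y)).
Proof.
  intros HT HV Vx CV.
  destruct (classic (exists p, V p /\ x < p)) as [[p [Vp Hp]]|Hn].
  - exists (p - x). split. lra. left. intros y Hy. apply (conn_interval tau V x p y); auto. lra.
  - exists 1. split. lra. right. intros y Hy [A [CA [Ax Ay]]].
    destruct (CA (fun z => x < z) (fun z => V z \/ z < x)) as [z [Az [H1 [H2|H2]]]].
    + apply tauE; auto. apply eta_gt.
    + apply tauU; auto. apply tauE; auto. apply eta_lt.
    + intros z _. destruct (Rtotal_order z x) as [H|[H|H]]; auto. subst; auto.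
    + exists y; auto.
    + exists x; auto.
    + apply Hn; eauto.
    + lra.
Qed.

Lemma connK tau V x y : connected_in tau V -> V x -> V y -> K tau x y.
Proof. intros; exists V; auto. Qed.

Lemma LOC tau V W y : in_T tau -> locally_connected tau -> tau V -> connected_in tau V -> V y ->
  tau W -> W y -> exists d, 0 < d /\ forall z, V z -> Rabs (z - y) < d -> W z.
Proof.
  intros HT HL HV CV Vy HW Wy.
  destruct (HL y (fun x => W x /\ V x)) as [V' [HV' [V'y [CV' Sub]]]].
  { apply tauI; auto. } { auto. }
  destruct (SideL tau V' y HT HV' V'y CV') as [r1 [Hr1 D1]].
  destruct (SideR tau V' y HT HV' V'y CV') as [r2 [Hr2 D2]].
  exists (Rmin r1 r2). split. apply Rmin_glb_lt; auto.
  intros z Vz Hz. apply Rabs_def2 in Hz. pose proof (Rmin_l r1 r2). pose proof (Rmin_r r1 r2).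
  destruct (Rtotal_order z y) as [Ho|[Ho|Ho]].
  - destruct D1 as [D1|D1].
    + apply (proj1 (Sub z (D1 z ltac:(lra)))).
    + exfalso. apply (D1 z Ho). exact (connK tau V y z CV Vy Vz).
  - subst. apply (proj1 (Sub y V'y)).
  - destruct D2 as [D2|D2].
    + apply (proj1 (Sub z (D2 z ltac:(lra)))).
    + exfalso. apply (D2 z Ho). exact (connK tau V y z CV Vy Vz).
Qed.

Lemma RAD tau V x : in_T tau -> tau V -> connected_in tau V -> V x ->
  exists r, 0 < r /\ forall y, K tau x y -> Rabs (x - y) < r -> V y.
Proof.
  intros HT HV CV Vx.
  destruct (SideL tau V x HT HV Vx CV) as [r1 [Hr1 D1]].
  destruct (SideR tau V x HT HV Vx CV) as [r2 [Hr2 D2]].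
  exists (Rmin r1 r2). split. apply Rmin_glb_lt; auto.
  intros y Ky Hy. apply Rabs_def2 in Hy. pose proof (Rmin_l r1 r2). pose proof (Rmin_r r1 r2).
  destruct (Rtotal_order y x) as [Ho|[Ho|Ho]].
  - destruct D1 as [D1|D1]. apply D1; lra. exfalso; eapply D1; eauto.
  - subst; auto.
  - destruct D2 as [D2|D2]. apply D2; lra. exfalso; eapply D2; eauto.
Qed.

Definition Euc tau x := forall W, tau W -> W x -> exists e, 0 < e /\ forall z, Rabs (z - x) < e -> W z.

Lemma IL tau V p q y : in_T tau -> locally_connected tau -> tau V -> connected_in tau V ->
  V p -> V q -> p < y < q -> Euc tau y.
Proof.
  intros HT HL HV CV Vp Vq Hy W HW Wy.
  assert (Vy : V y) by (apply (conn_interval tau V p q y); auto).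
  destruct (LOC tau V W y HT HL HV CV Vy HW Wy) as [d [Hd Hd']].
  exists (Rmin d (Rmin (y - p) (q - y))). split.
  { apply Rmin_glb_lt; auto. apply Rmin_glb_lt; lra. }
  intros z Hz. assert (Hz0 := Hz). pose proof (Rmin_l d (Rmin (y - p) (q - y))). pose proof (Rmin_r d (Rmin (y - p) (q - y))).
  pose proof (Rmin_l (y - p) (q - y)). pose proof (Rmin_r (y - p) (q - y)).
  apply Hd'. 2: lra. apply Rabs_def2 in Hz. apply (conn_interval tau V p q z); auto. lra.
Qed.

Lemma Euc_notGamma tau x : in_T tau -> Euc tau x -> ~ Gamma tau x.
Proof.
  intros HT HE HG. apply HG. intro N. split.
  - intros [U [HU [Ux S]]]. exists U. split; auto. apply tauE; auto.
  - intros [U [HU [Ux S]]]. destruct (HE U HU Ux) as [e [He He']].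
    exists (fun z => Rabs (z - x) < e). split. apply eta_ball. split.
    rewrite Rminus_diag, Rabs_R0; auto. auto.
Qed.

Lemma notGamma_Euc tau x : in_T tau -> ~ Gamma tau x -> Euc tau x.
Proof.
  intros HT HG. apply NNPP in HG. intros W HW Wx.
  destruct (proj2 (HG W)) as [U [HU [Ux S]]]. { exists W; auto. }
  destruct (HU x Ux) as [[d Hd] Hinc]. exists d. split; [exact Hd|].
  simpl. intros z Hz. apply S. apply Hinc. exact Hz.
Qed.

Lemma Gamma_closed tau : in_T tau -> locally_connected tau -> closed_set (Gamma tau).
Proof.
  intros HT HL. apply eta_of. intros x Hx. unfold complementary in Hx.
  apply notGamma_Euc in Hx; auto.
  destruct (HL x (fun _ => True) (tauT tau HT) I) as [V [HV [Vx [CV _]]]].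
  destruct (Hx V HV Vx) as [e [He He']].
  exists (e/2). split. lra. intros y Hy. unfold complementary.
  apply Euc_notGamma; auto.
  apply (IL tau V (y - e/2) (y + e/2) y HT HL HV CV).
  - apply He'. apply Rabs_def2 in Hy. apply Rabs_def1; lra.
  - apply He'. apply Rabs_def2 in Hy. apply Rabs_def1; lra.
  - lra.
Qed.

Lemma CPT tau p q :
  (forall y, p <= y <= q -> forall W, tau W -> W y ->
     exists d, 0 < d /\ forall z, p <= z <= q -> Rabs (z - y) < d -> W z) ->
  compact_in tau (fun z => p <= z <= q).
Proof.
  intros H F HF Hc.
  set (P := fun y (Ud : (R -> Prop) * R) => F (fst Ud) /\ 0 < snd Ud /\
              forall z, p <= z <= q -> Rabs (z - y) < snd Ud -> fst Ud z).
  set (G := fun y => epsilon (inhabits ((fun _ : R => True), 1)) (P y)).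
  assert (GS : forall y, p <= y <= q -> P y (G y)).
  { intros y Hy. unfold G. apply epsilon_spec.
    destruct (Hc y Hy) as [U [FU Uy]].
    destruct (H y Hy U (HF U FU) Uy) as [d [Hd Hd']].
    exists (U, d). unfold P; simpl; auto. }
  set (fm := fun y z => p <= y <= q /\ Rabs (z - y) < snd (G y)).
  set (fam := mkfamily (fun y => exists z, fm y z) fm (fun y H => H)).
  destruct (compact_P3 p q fam) as [D [Hcov [l Hl]]].
  { split.
    - intros x Hx. exists x. simpl. unfold fm. split; auto.
      rewrite Rminus_diag, Rabs_R0. apply (GS x Hx).
    - intros y. apply eta_of. intros z [Hy Hz]. exists (snd (G y) - Rabs (z - y)).
      split. lra. intros w Hw. split; auto.
      pose proof (Rabs_triang (w - z) (z - y)). replace (w - z + (z - y)) with (w - y) in H0 by ring. lra. }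
  exists (map (fun y => fst (G y)) l). split.
  - intros U HU. apply in_map_iff in HU. destruct HU as [y [<- Hy]].
    apply Hl in Hy. destruct Hy as [[z [Hy _]] _]. apply (GS y Hy).
  - intros x Hx. destruct (Hcov x Hx) as [y [Hyx Dy]].
    exists (fst (G y)). split.
    + apply (in_map (fun y => fst (G y))). apply Hl. split; auto. exists x; exact Hyx.
    + destruct Hyx as [Hy Hxy]. apply (GS y Hy); auto.
Qed.

Lemma loc_compact tau : in_T tau -> locally_connected tau -> locally_compact tau.
Proof.
  intros HT HL x.
  destruct (HL x (fun _ => True) (tauT tau HT) I) as [V [HV [Vx [CV _]]]].
  assert (L : exists p lo, p <= x /\ lo < x /\ (forall z, p <= z <= x -> V z) /\
             (forall z, V z -> lo < z -> z <= x -> p <= z)).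
  { destruct (SideL tau V x HT HV Vx CV) as [r [Hr [D|D]]].
    - exists (x - r/2), (x - r/2). split. lra. split. lra. split.
      + intros z Hz. destruct (Req_dec z x) as [->|Hne]; auto. apply D. lra.
      + intros; lra.
    - exists x, (x - 1). split. lra. split. lra. split.
      + intros z Hz. replace z with x by lra. auto.
      + intros z Vz _ Hz. destruct (Rle_lt_dec x z); auto. exfalso. apply (D z r0).
        exact (connK tau V x z CV Vx Vz). }
  assert (Rr : exists q hi, x <= q /\ x < hi /\ (forall z, x <= z <= q -> V z) /\
             (forall z, V z -> z < hi -> x <= z -> z <= q)).
  { destruct (SideR tau V x HT HV Vx CV) as [r [Hr [D|D]]].
    - exists (x + r/2), (x + r/2). split. lra. split. lra. split.
      + intros z Hz. destruct (Req_dec z x) as [->|Hne]; auto. apply D. lra.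
      + intros; lra.
    - exists x, (x + 1). split. lra. split. lra. split.
      + intros z Hz. replace z with x by lra. auto.
      + intros z Vz _ Hz. destruct (Rle_lt_dec z x); auto. exfalso. apply (D z r0).
        exact (connK tau V x z CV Vx Vz). }
  destruct L as [p [lo [Hp [Hlo [Lin Lout]]]]].
  destruct Rr as [q [hi [Hq [Hhi [Rin Rout]]]]].
  assert (PQ : forall z, p <= z <= q -> V z).
  { intros z Hz. destruct (Rle_lt_dec z x). apply Lin; lra. apply Rin; lra. }
  exists (fun z => p <= z <= q). split.
  - exists (fun z => V z /\ lo < z < hi). split.
    { apply tauI; auto. apply tauE; auto. apply eta_int. }
    split. split; auto; lra.
    intros z [Vz Hz]. destruct (Rle_lt_dec z x).
    + split. apply Lout; auto; lra. lra.
    + split. lra. apply Rout; auto; lra.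
  - apply CPT. intros y Hy W HW Wy.
    destruct (LOC tau V W y HT HL HV CV (PQ y Hy) HW Wy) as [d [Hd Hd']].
    exists d. split; auto.
Qed.

Lemma arch_inv e : 0 < e -> exists k : nat, / INR (S k) < e.
Proof.
  intro He. destruct (archimed (/ e)) as [H1 H2].
  assert (Hp : 0 < / e) by (apply Rinv_0_lt_compat; auto).
  exists (Z.to_nat (up (/ e))).
  assert (HI : IZR (up (/ e)) <= INR (Z.to_nat (up (/ e)))).
  { rewrite INR_IZR_INZ. apply IZR_le. lia. }
  rewrite S_INR.
  assert (Hq : / (INR (Z.to_nat (up (/ e))) + 1) < / / e).
  { apply Rinv_lt_contravar. apply Rmult_lt_0_compat; lra. lra. }
  rewrite Rinv_inv in Hq. exact Hq.
Qed.

Definition zof (n : nat) : Z :=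
  if Nat.even n then Z.of_nat (Nat.div2 n) else (- Z.of_nat (Nat.div2 n) - 1)%Z.

Lemma zof_surj (z : Z) : exists n, zof n = z.
Proof.
  destruct (Z_le_gt_dec 0 z) as [H|H].
  - exists (2 * Z.to_nat z)%nat. unfold zof. rewrite Nat.even_even, Nat.div2_double. lia.
  - exists (S (2 * Z.to_nat (- z - 1)))%nat. unfold zof.
    rewrite Nat.even_succ, Nat.odd_even, Nat.div2_succ_double. lia.
Qed.

Definition Wc tau y := epsilon (inhabits (fun _ : R => True))
   (fun W => tau W /\ W y /\ connected_in tau W).

Lemma Wc_spec tau y : in_T tau -> locally_connected tau ->
  tau (Wc tau y) /\ Wc tau y y /\ connected_in tau (Wc tau y).
Proof.
  intros HT HL. unfold Wc. apply epsilon_spec.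
  destruct (HL y (fun _ => True) (tauT tau HT) I) as [V [HV [Vx [CV _]]]].
  exists V; auto.
Qed.

Definition Bas tau (f : nat -> R) (n : nat) : R -> Prop :=
  let i := fst (Cantor.of_nat (Nat.div2 n)) in
  let k := snd (Cantor.of_nat (Nat.div2 n)) in
  if Nat.even n then (fun z => Wc tau (f i) z /\ Rabs (z - f i) < / INR (S k))
  else (fun z => IZR (zof i) / INR (S k) < z < (IZR (zof i) + 2) / INR (S k)).

Lemma countable_sc tau : in_T tau -> locally_connected tau ->
  countable_set (Gamma tau) -> second_countable tau.
Proof.
  intros HT HL [f Hf]. exists (Bas tau f). split.
  - intro n. unfold Bas. destruct (Nat.even n).
    + apply tauI; auto. apply (Wc_spec tau _ HT HL). apply tauE; auto. apply eta_ball.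
    + apply tauE; auto. apply eta_int.
  - intros U x HU Ux. destruct (classic (Gamma tau x)) as [G|G].
    + destruct (Hf x G) as [i Hi].
      subst x.
      destruct (Wc_spec tau (f i) HT HL) as [HV [Vx CV]].
      destruct (LOC tau (Wc tau (f i)) U (f i) HT HL HV CV Vx HU Ux) as [d [Hd Hd']].
      destruct (arch_inv d Hd) as [k Hk].
      exists (2 * Cantor.to_nat (i, k))%nat. unfold Bas.
      rewrite Nat.even_even, Nat.div2_double, Cantor.cancel_of_to. cbn [fst snd].
      split.
      * split. auto. rewrite Rminus_diag, Rabs_R0.
        apply Rinv_0_lt_compat. apply lt_0_INR. lia.
      * intros y [Vy Hy]. apply Hd'. auto. lra.
    + apply notGamma_Euc in G; auto. destruct (G U HU Ux) as [e [He He']].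
      destruct (arch_inv (e / 2)) as [k Hk]. lra.
      set (m := INR (S k)).
      assert (Hm : 0 < m) by (apply lt_0_INR; lia).
      destruct (archimed (x * m)) as [A1 A2].
      destruct (zof_surj (up (x * m) - 2)) as [j Hj].
      exists (S (2 * Cantor.to_nat (j, k))). unfold Bas.
      rewrite Nat.even_succ, Nat.odd_even, Nat.div2_succ_double, Cantor.cancel_of_to. cbn [fst snd].
      fold m. rewrite Hj, minus_IZR.
      assert (Hinv : / m < e / 2) by exact Hk.
      split.
      * split.
        -- apply (Rmult_lt_reg_r m); auto. unfold Rdiv. rewrite Rmult_assoc, Rinv_l by lra. lra.
        -- apply (Rmult_lt_reg_r m); auto. unfold Rdiv. rewrite Rmult_assoc, Rinv_l by lra. lra.
      * intros y [Y1 Y2]. apply He'.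
        assert (E1 : (IZR (up (x * m)) - 2 + 2) / m - (IZR (up (x * m)) - 2) / m = 2 * / m)
          by (field; lra).
        assert (E2 : (IZR (up (x * m)) - 2) / m < x).
        { apply (Rmult_lt_reg_r m); auto. unfold Rdiv. rewrite Rmult_assoc, Rinv_l by lra. lra. }
        assert (E3 : x < (IZR (up (x * m)) - 2 + 2) / m).
        { apply (Rmult_lt_reg_r m); auto. unfold Rdiv. rewrite Rmult_assoc, Rinv_l by lra. lra. }
        apply Rabs_def1; lra.
Qed.

Lemma sc_countable tau : in_T tau -> locally_connected tau ->
  second_countable tau -> countable_set (Gamma tau).
Proof.
  intros HT HL [B [HB HBb]].
  set (mn := fun n => epsilon (inhabits 0) (fun y => B n y /\ forall z, B n z -> y <= z)).
  set (mx := fun n => epsilon (inhabits 0) (fun y => B n y /\ forall z, B n z -> z <= y)).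
  exists (fun m => if Nat.even m then mn (Nat.div2 m) else mx (Nat.div2 m)).
  intros g Gg.
  destruct (HL g (fun _ => True) (tauT tau HT) I) as [V [HV [Vg [CV _]]]].
  assert (NV : ~ exists p q, V p /\ V q /\ p < g < q).
  { intros [p [q [Vp [Vq Hpq]]]]. apply (Euc_notGamma tau g HT); auto.
    apply (IL tau V p q g); auto. }
  destruct (HBb V g HV Vg) as [n [Bg Bsub]].
  destruct (classic (forall z, B n z -> g <= z)) as [Hmin|Hmin].
  - exists (2 * n)%nat. rewrite Nat.even_even, Nat.div2_double.
    assert (S : B n (mn n) /\ forall z, B n z -> mn n <= z).
    { unfold mn. apply epsilon_spec. exists g; auto. }
    destruct S as [S1 S2]. apply Rle_antisym; auto.
  - apply not_all_ex_not in Hmin. destruct Hmin as [p Hp].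
    apply imply_to_and in Hp. destruct Hp as [Bp Hp]. apply Rnot_le_lt in Hp.
    assert (Hmax : forall z, B n z -> z <= g).
    { intros z Bz. apply Rnot_lt_le. intro Hz. apply NV. exists p, z. auto. }
    exists (S (2 * n)). rewrite Nat.even_succ, Nat.odd_even, Nat.div2_succ_double.
    assert (S : B n (mx n) /\ forall z, B n z -> z <= mx n).
    { unfold mx. apply epsilon_spec. exists g; auto. }
    destruct S as [S1 S2]. apply Rle_antisym; auto.
Qed.

Definition openend tau x a := ~ K tau x a /\ forall e, 0 < e -> exists z, K tau x z /\ Rabs (z - a) < e.
Definition Dset tau x r := 0 <= r <= 1 /\ forall a, openend tau x a -> r <= Rabs (x - a).

Lemma Dbound tau x : bound (Dset tau x).
Proof. exists 1. intros r [H _]. lra. Qed.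
Lemma Dne tau x : exists r, Dset tau x r.
Proof. exists 0. split. lra. intros; apply Rabs_pos. Qed.

Definition Dv tau x := proj1_sig (completeness (Dset tau x) (Dbound tau x) (Dne tau x)).

Lemma Dv_lub tau x : is_lub (Dset tau x) (Dv tau x).
Proof. unfold Dv. destruct completeness; auto. Qed.

Lemma Dv_range tau x : 0 <= Dv tau x <= 1.
Proof.
  destruct (Dv_lub tau x) as [H1 H2]. split.
  - apply H1. split. lra. intros; apply Rabs_pos.
  - apply H2. intros r [H _]. lra.
Qed.

Lemma Dv_le tau x a : openend tau x a -> Dv tau x <= Rabs (x - a).
Proof.
  intro H. destruct (Dv_lub tau x) as [H1 H2]. apply H2. intros r [_ Hr]. auto.
Qed.

Lemma openend_K tau x y a : K tau x y -> openend tau x a -> openend tau y a.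
Proof.
  intros Kxy [H1 H2]. split.
  - intro Kya. apply H1. eapply K_trans; eauto.
  - intros e He. destruct (H2 e He) as [z [Kxz Hz]]. exists z. split; auto.
    eapply K_trans; eauto. apply K_sym; auto.
Qed.

Lemma Dv_lip1 tau x y : K tau x y -> Dv tau x <= Dv tau y + Rabs (x - y).
Proof.
  intro Kxy. destruct (Dv_lub tau x) as [H1 H2]. apply H2. intros r [Hr1 Hr2].
  destruct (Rle_lt_dec r (Rabs (x - y))) as [Hle|Hlt].
  - pose proof (Dv_range tau y). lra.
  - assert (Dset tau y (r - Rabs (x - y))).
    { split. split. lra. pose proof (Rabs_pos (x - y)). lra.
      intros a Ha. apply openend_K with (y := x) in Ha; [|apply K_sym; auto].
      pose proof (Hr2 a Ha). pose proof (Rabs_triang (x - y) (y - a)).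
      replace (x - y + (y - a)) with (x - a) in H0 by ring. lra. }
    destruct (Dv_lub tau y) as [H3 _]. pose proof (H3 _ H). lra.
Qed.

Lemma Dv_lip tau x y : K tau x y -> Rabs (Dv tau x - Dv tau y) <= Rabs (x - y).
Proof.
  intro Kxy. pose proof (Dv_lip1 tau x y Kxy). pose proof (Dv_lip1 tau y x (K_sym tau x y Kxy)).
  rewrite Rabs_minus_sym in H0. apply Rabs_le. lra.
Qed.

Lemma Dv_pos tau x : in_T tau -> locally_connected tau -> 0 < Dv tau x.
Proof.
  intros HT HL.
  destruct (HL x (fun _ => True) (tauT tau HT) I) as [V [HV [Vx [CV _]]]].
  destruct (SideL tau V x HT HV Vx CV) as [r1 [Hr1 D1]].
  destruct (SideR tau V x HT HV Vx CV) as [r2 [Hr2 D2]].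
  set (r := Rmin 1 (Rmin r1 r2)).
  assert (Hr : 0 < r) by (unfold r; repeat apply Rmin_glb_lt; lra).
  assert (R1 : r <= 1) by apply Rmin_l.
  assert (R2 : r <= r1) by (unfold r; pose proof (Rmin_r 1 (Rmin r1 r2)); pose proof (Rmin_l r1 r2); lra).
  assert (R3 : r <= r2) by (unfold r; pose proof (Rmin_r 1 (Rmin r1 r2)); pose proof (Rmin_r r1 r2); lra).
  assert (Dset tau x r).
  { split. lra. intros a [Na Ha].
    apply Rnot_lt_le. intro Hlt. apply Rabs_def2 in Hlt.
    destruct (Rtotal_order a x) as [Ho|[Ho|Ho]].
    - destruct D1 as [D1|D1].
      + apply Na. apply (connK tau V); auto. apply D1. lra.
      + destruct (Ha (x - a)) as [z [Kz Hz]]. lra. apply Rabs_def2 in Hz.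
        apply (D1 z). lra. auto.
    - subst. apply Na. apply K_refl.
    - destruct D2 as [D2|D2].
      + apply Na. apply (connK tau V); auto. apply D2. lra.
      + destruct (Ha (a - x)) as [z [Kz Hz]]. lra. apply Rabs_def2 in Hz.
        apply (D2 z). lra. auto. }
  destruct (Dv_lub tau x) as [H1 _]. pose proof (H1 r H). lra.
Qed.

Lemma INV tau x e : 0 < Dv tau x -> 0 < e -> exists d, 0 < d /\
  forall y, K tau x y -> Rabs (x - y) < d -> Rabs (/ Dv tau x - / Dv tau y) < e.
Proof.
  intros Ha He. set (a := Dv tau x) in *.
  exists (Rmin (a / 2) (e * a * a / 4)). split.
  { apply Rmin_glb_lt. lra. apply Rmult_lt_0_compat; [|lra]. repeat apply Rmult_lt_0_compat; lra. }
  intros y Kxy Hy. pose proof (Dv_lip tau x y Kxy). fold a in H.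
  set (b := Dv tau y) in *.
  pose proof (Rmin_l (a / 2) (e * a * a / 4)). pose proof (Rmin_r (a / 2) (e * a * a / 4)).
  assert (Hab : Rabs (a - b) < e * a * a / 4) by lra.
  assert (Hab2 : Rabs (a - b) < a / 2) by lra. apply Rabs_def2 in Hab2. assert (Hb : a / 2 < b) by lra.
  replace (/ a - / b) with ((b - a) * / (a * b)) by (field; lra).
  rewrite Rabs_mult, Rabs_inv, (Rabs_pos_eq (a * b)) by (apply Rmult_le_pos; lra).
  rewrite Rabs_minus_sym.
  apply (Rmult_lt_reg_r (a * b)). apply Rmult_lt_0_compat; lra.
  rewrite Rmult_assoc, Rinv_l by (apply Rgt_not_eq, Rmult_lt_0_compat; lra).
  assert (e * a * a / 4 < e * (a * b)).
  { assert (0 < e * a) by (apply Rmult_lt_0_compat; lra). nra. }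
  lra.
Qed.

Definition sepv tau x y : R := if excluded_middle_informative (K tau x y) then 0 else 1.
Definition dm tau x y := Rabs (x - y) + sepv tau x y + Rabs (/ Dv tau x - / Dv tau y).

Lemma sepv_K tau x y : K tau x y -> sepv tau x y = 0.
Proof. intro H. unfold sepv. destruct excluded_middle_informative; tauto. Qed.
Lemma sepv_nK tau x y : ~ K tau x y -> sepv tau x y = 1.
Proof. intro H. unfold sepv. destruct excluded_middle_informative; tauto. Qed.
Lemma sepv_range tau x y : 0 <= sepv tau x y.
Proof. unfold sepv. destruct excluded_middle_informative; lra. Qed.

Lemma dm_K tau x y : dm tau x y < 1 -> K tau x y.
Proof.
  intro H. apply NNPP. intro N. unfold dm in H. rewrite sepv_nK in H by auto.
  pose proof (Rabs_pos (x - y)). pose proof (Rabs_pos (/ Dv tau x - / Dv tau y)). lra.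
Qed.

Lemma dm_metric tau : is_metric (dm tau).
Proof.
  unfold dm. split; [|split; [|split]].
  - intros x y. pose proof (Rabs_pos (x - y)). pose proof (Rabs_pos (/ Dv tau x - / Dv tau y)).
    pose proof (sepv_range tau x y). lra.
  - intros x y. split.
    + intro H. pose proof (Rabs_pos (x - y)). pose proof (Rabs_pos (/ Dv tau x - / Dv tau y)).
      pose proof (sepv_range tau x y).
      assert (Rabs (x - y) = 0) by lra. pose proof (Rle_abs (x - y)). pose proof (Rle_abs (- (x - y))). rewrite Rabs_Ropp in H5. lra.
    + intros ->. rewrite sepv_K by apply K_refl. rewrite !Rminus_diag, Rabs_R0. lra.
  - intros x y. rewrite (Rabs_minus_sym x y), (Rabs_minus_sym (/ Dv tau x)).
    f_equal. f_equal.
    destruct (classic (K tau x y)) as [Kxy|Nxy].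
    + rewrite !sepv_K; auto. apply K_sym; auto.
    + rewrite !sepv_nK; auto. intro Hc; apply Nxy, K_sym; auto.
  - intros x y z.
    pose proof (Rabs_triang (x - y) (y - z)). replace (x - y + (y - z)) with (x - z) in H by ring.
    pose proof (Rabs_triang (/ Dv tau x - / Dv tau y) (/ Dv tau y - / Dv tau z)).
    replace (/ Dv tau x - / Dv tau y + (/ Dv tau y - / Dv tau z)) with (/ Dv tau x - / Dv tau z) in H0 by ring.
    assert (sepv tau x z <= sepv tau x y + sepv tau y z).
    { pose proof (sepv_range tau x y). pose proof (sepv_range tau y z).
      destruct (classic (K tau x z)) as [Kxz|Nxz]. rewrite sepv_K by auto; lra.
      rewrite (sepv_nK tau x z) by auto.
      destruct (classic (K tau x y)) as [Kxy|Nxy]. 2: rewrite sepv_nK by auto; lra.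
      destruct (classic (K tau y z)) as [Kyz|Nyz]. 2: rewrite (sepv_nK tau y z) by auto; lra.
      exfalso. apply Nxz. eapply K_trans; eauto. }
    lra.
Qed.

Lemma BALL tau x e : in_T tau -> locally_connected tau -> 0 < e ->
  exists W, tau W /\ W x /\ forall y, W y -> dm tau x y < e.
Proof.
  intros HT HL He.
  destruct (INV tau x (e / 2) (Dv_pos tau x HT HL)) as [d [Hd Hd']]. lra.
  destruct (HL x (fun _ => True) (tauT tau HT) I) as [V [HV [Vx [CV _]]]].
  exists (fun y => V y /\ Rabs (y - x) < Rmin d (e / 2)). split.
  { apply tauI; auto. apply tauE; auto. apply eta_ball. }
  split. { split; auto. rewrite Rminus_diag, Rabs_R0. apply Rmin_glb_lt; lra. }
  intros y [Vy Hy]. pose proof (Rmin_l d (e/2)). pose proof (Rmin_r d (e/2)).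
  assert (Kxy : K tau x y) by (apply (connK tau V); auto).
  unfold dm. rewrite sepv_K by auto. rewrite Rabs_minus_sym in Hy.
  assert (Rabs (/ Dv tau x - / Dv tau y) < e / 2) by (apply Hd'; auto; lra).
  lra.
Qed.

Lemma dm_induces tau : in_T tau -> locally_connected tau -> metric_induces (dm tau) tau.
Proof.
  intros HT HL U. split.
  - intros HU x Ux.
    destruct (HL x U HU Ux) as [V [HV [Vx [CV Sub]]]].
    destruct (RAD tau V x HT HV CV Vx) as [r [Hr Hr']].
    exists (Rmin 1 r). split. apply Rmin_glb_lt; lra.
    intros y Hy. pose proof (Rmin_l 1 r). pose proof (Rmin_r 1 r).
    apply Sub. apply Hr'. apply dm_K. lra.
    unfold dm in Hy. pose proof (sepv_range tau x y). pose proof (Rabs_pos (/ Dv tau x - / Dv tau y)). lra.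
  - intro H.
    apply tau_ext with (fun z => exists W, (tau W /\ forall y, W y -> U y) /\ W z).
    + apply tauUnion; auto. intros W [HW _]; auto.
    + intro z. split.
      * intros [W [[_ S] Wz]]. auto.
      * intro Uz. destruct (H z Uz) as [e [He He']].
        destruct (BALL tau z e HT HL He) as [W [HW [Wz HWd]]].
        exists W. split; auto.
Qed.

Lemma dm_complete tau : in_T tau -> locally_connected tau -> metric_complete (dm tau).
Proof.
  intros HT HL u HC.
  assert (DE : forall x y, Rabs (x - y) <= dm tau x y).
  { intros x y. unfold dm. pose proof (sepv_range tau x y). pose proof (Rabs_pos (/ Dv tau x - / Dv tau y)). lra. }
  assert (DI : forall x y, Rabs (/ Dv tau x - / Dv tau y) <= dm tau x y).
  { intros x y. unfold dm. pose proof (sepv_range tau x y). pose proof (Rabs_pos (x - y)). lra. }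
  destruct (R_complete u) as [l Hl].
  { intros e He. destruct (HC e He) as [N HN]. exists N. intros n m Hn Hm.
    unfold Rdist. pose proof (HN n m Hn Hm). pose proof (DE (u n) (u m)). lra. }
  destruct (HC 1) as [N0 HN0]. lra.
  assert (KN : forall n, (N0 <= n)%nat -> K tau (u N0) (u n)).
  { intros n Hn. apply dm_K. apply HN0; auto. }
  set (M := / Dv tau (u N0) + 1).
  assert (HM : forall n, (N0 <= n)%nat -> / M < Dv tau (u n)).
  { intros n Hn. pose proof (HN0 N0 n (Nat.le_refl _) Hn) as Q1. pose proof (DI (u N0) (u n)) as Q2.
    assert (Q3 : Rabs (/ Dv tau (u N0) - / Dv tau (u n)) < 1) by lra.
    apply Rabs_def2 in Q3.
    pose proof (Dv_pos tau (u n) HT HL). pose proof (Dv_pos tau (u N0) HT HL).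
    assert (Hi : / Dv tau (u n) < M) by (unfold M; lra).
    assert (0 < / Dv tau (u n)) by (apply Rinv_0_lt_compat; auto).
    rewrite <- (Rinv_inv (Dv tau (u n))). apply Rinv_lt_contravar; auto.
    apply Rmult_lt_0_compat; lra. }
  assert (HMp : 0 < / M).
  { apply Rinv_0_lt_compat. unfold M. pose proof (Dv_pos tau (u N0) HT HL).
    pose proof (Rinv_0_lt_compat _ H). lra. }
  assert (KL : K tau (u N0) l).
  { apply NNPP. intro NK.
    assert (OE : openend tau (u N0) l).
    { split; auto. intros e He. destruct (Hl e He) as [N1 HN1].
      exists (u (max N0 N1)). split. apply KN. apply Nat.le_max_l.
      apply HN1. apply Nat.le_max_r. }
    destruct (Hl (/ M) HMp) as [N1 HN1].
    set (n := max N0 N1).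
    pose proof (HN1 n (Nat.le_max_r _ _)). unfold Rdist in H.
    pose proof (Dv_le tau (u n) l (openend_K tau _ _ _ (KN n (Nat.le_max_l _ _)) OE)).
    pose proof (HM n (Nat.le_max_l _ _)). lra. }
  exists l. intros e He.
  destruct (INV tau l (e / 2) (Dv_pos tau l HT HL)) as [d [Hd Hd']]. lra.
  destruct (Hl (Rmin d (e / 2))) as [N1 HN1]. apply Rmin_glb_lt; lra.
  exists (max N0 N1). intros n Hn.
  pose proof (HN1 n ltac:(lia)). unfold Rdist in H.
  pose proof (Rmin_l d (e/2)). pose proof (Rmin_r d (e/2)).
  assert (Kn : K tau l (u n)).
  { apply K_sym. eapply K_trans. apply K_sym. apply KN. lia. auto. }
  unfold dm. rewrite sepv_K by (apply K_sym; auto).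
  rewrite (Rabs_minus_sym (/ Dv tau (u n))).
  assert (Rabs (/ Dv tau l - / Dv tau (u n)) < e / 2).
  { apply Hd'; auto. rewrite Rabs_minus_sym. lra. }
  lra.
Qed.

Theorem proposition2 (tau : (R -> Prop) -> Prop) :
  in_T tau -> locally_connected tau ->
  locally_compact tau /\ completely_metrizable tau /\ closed_set (Gamma tau) /\
  (countable_set (Gamma tau) <-> second_countable tau).
Proof.
  intros HT HL. split; [|split; [|split]].
  - apply loc_compact; auto.
  - exists (dm tau). split. apply dm_metric. split. apply dm_induces; auto. apply dm_complete; auto.
  - apply Gamma_closed; auto.
  - split. apply countable_sc; auto. apply sc_countable; auto.
Qed.
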